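(* Let $P$ be a finite poset and $R$ a weakly-consistent restriction function on $P$. Then the poset $\Gamma'(P,R)$ is isomorphic to the dual of the poset of meet-irreducible elements of the lattice $\mathrm{WInc}^R(P)$. Consequently, the order ideals of $\Gamma'(P,R)$ are in bijection with $\mathrm{WInc}^R(P)$.
   Context: A restriction function assigns to each $p\in P$ a nonempty finite $R(p)\subseteq\mathbb{Z}$. It is weakly-consistent if for every cover $x\lessdot y$ in $P$, $\min R(x)\le\min R(y)$ and $\max R(x)\le\max R(y)$. $\mathrm{WInc}^R(P)$ is the set of $f:P\to\mathbb{Z}$ with $f(p)\in R(p)$ and $p_1<p_2\Rightarrow f(p_1)\le f(p_2)$, ordered pointwise (a distributive lattice with pointwise min/max). An element is meet-irreducible if it is not the top and $x=y\wedge z$ implies $x\in\{y,z\}$. $R(p)^*=R(p)\setminus\{\max R(p)\}$; $R(p)_{>k}$ is the smallest element of $R(p)$ greater than $k$; $R(p)_{\le k}$ is the largest element of $R(p)$ less than or equal to $k$. $\Gamma'(P,R)$ is the poset on $\{(p,k):p\in P,k\in R(p)^*\}$ whose order is the reflexive–transitive closure of the relation $(p_1,k_1)\lessdot(p_2,k_2)$, holding iff either (1) $p_1=p_2$ and $R(p_1)_{>k_2}=k_1$; or (2) $p_1\lessdot p_2$ in $P$, $R(p_1)_{\le k_2}=k_1$, and there is no $k\in R(p_2)$ with $k>k_2$ and $R(p_1)_{\le k}=k_1$. *)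

(* Defs.v *)
From HB Require Import structures.
From mathcomp Require Import all_boot all_order all_algebra.
From mathcomp Require Import finmap.
From Stdlib Require Import Relations.
Set Implicit Arguments. Unset Strict Implicit. Unset Printing Implicit Defensive.
Import Order.TTheory GRing.Theory Num.Theory.
Local Open Scope order_scope.
Local Open Scope fset_scope.

Section Defs.
Variables (d : Order.disp_t) (P : finPOrderType d).

Definition covers (x y : P) : bool :=
  (x < y) && [forall z : P, ~~ ((x < z) && (z < y))].

Definition smin (s : seq int) : int := foldr Order.min (head 0%R s) s.
Definition smax (s : seq int) : int := foldr Order.max (head 0%R s) s.

(* a restriction function: each R p is a nonempty finite subset of Z
   (represented by a list; only membership matters) *)
Definition restriction (R : P -> seq int) : Prop := forall p, R p != [::].

Definition weakly_consistent (R : P -> seq int) : Prop :=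
  forall x y : P, covers x y ->
    smin (R x) <= smin (R y) /\ smax (R x) <= smax (R y).

(* R(p)_{>k} = m : m is the smallest element of s greater than k *)
Definition next_gt (s : seq int) (k m : int) : bool :=
  [&& m \in s, k < m & all (fun j => (k < j) ==> (m <= j)) s].

(* R(p)_{<=k} = m : m is the largest element of s that is <= k *)
Definition prev_le (s : seq int) (k m : int) : bool :=
  [&& m \in s, m <= k & all (fun j => (j <= k) ==> (j <= m)) s].

Definition winc (R : P -> seq int) (f : {ffun P -> int}) : Prop :=
  (forall p, f p \in R p) /\ (forall p1 p2 : P, p1 < p2 -> f p1 <= f p2).

Definition ptle (f g : {ffun P -> int}) : Prop := forall p, f p <= g p.

Definition ptmeet (f g : {ffun P -> int}) : {ffun P -> int} :=
  [ffun p => Order.min (f p) (g p)].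

Definition meet_irreducible (R : P -> seq int) (f : {ffun P -> int}) : Prop :=
  [/\ winc R f,
      ~ (forall g, winc R g -> ptle g f)
    & forall g h, winc R g -> winc R h -> f = ptmeet g h -> f = g \/ f = h].

Definition inGamma (R : P -> seq int) (x : P * int) : bool :=
  (x.2 \in R x.1) && (x.2 != smax (R x.1)).

Definition Gamma (R : P -> seq int) := {x : P * int | inGamma R x}.

Definition gcover (R : P -> seq int) (x y : P * int) : Prop :=
  [/\ inGamma R x, inGamma R y &
   let: (p1, k1) := x in let: (p2, k2) := y in
   (p1 = p2 /\ next_gt (R p1) k2 k1) \/
   [/\ covers p1 p2, prev_le (R p1) k2 k1 &
       ~ (exists k, [/\ k \in R p2, k2 < k & prev_le (R p1) k k1])]].

Definition gle (R : P -> seq int) : relation (P * int) :=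
  clos_refl_trans (P * int) (gcover R).

Definition order_ideal (R : P -> seq int) (I : {fset (P * int)}) : Prop :=
  (forall x, x \in I -> inGamma R x) /\
  (forall x y, inGamma R x -> y \in I -> gle R x y -> x \in I).

End Defs.

(* Main.v *)
Require Import Defs.
From HB Require Import structures.
From mathcomp Require Import all_boot all_order all_algebra.
From mathcomp Require Import finmap zify.
From Stdlib Require Import Relations ClassicalEpsilon.
Set Implicit Arguments. Unset Strict Implicit. Unset Printing Implicit Defensive.
Import Order.TTheory.
Local Open Scope order_scope.
Local Open Scope fset_scope.

Lemma sub3 (T : eqType) (a b y : T) s : y \in a :: s -> y \in [:: a, b & s].
Proof. by rewrite !inE => /orP[->|->]; rewrite ?orbT. Qed.

Lemma foldr_min_mem (b : int) s : foldr Order.min b s \in b :: s.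
Proof.
elim: s => [|x s IH] /=; first by rewrite inE.
case: leP => _; last exact: sub3.
by rewrite inE mem_head orbT.
Qed.

Lemma foldr_min_le (b : int) s z : z \in b :: s -> foldr Order.min b s <= z.
Proof.
elim: s => [|x s IH] /=; first by rewrite inE => /eqP->.
rewrite inE ge_min => /orP[hz|]; first by apply/orP; right; apply: IH; rewrite inE hz.
rewrite inE => /orP[/eqP->|hz]; first by rewrite lexx.
by apply/orP; right; apply: IH; rewrite inE hz orbT.
Qed.

Lemma foldr_min_ge (b : int) s z : z <= b -> (forall j, j \in s -> z <= j) -> z <= foldr Order.min b s.
Proof.
elim: s => [|x s IH] //= hb hs.
rewrite le_min; apply/andP; split; first by apply: hs; rewrite mem_head.
by apply: IH => // j hj; apply: hs; rewrite inE hj orbT.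
Qed.

Lemma foldr_max_mem (b : int) s : foldr Order.max b s \in b :: s.
Proof.
elim: s => [|x s IH] /=; first by rewrite inE.
case: leP => _; first exact: sub3.
by rewrite inE mem_head orbT.
Qed.

Lemma foldr_max_ge (b : int) s z : z \in b :: s -> z <= foldr Order.max b s.
Proof.
elim: s => [|x s IH] /=; first by rewrite inE => /eqP->.
rewrite inE le_max => /orP[hz|]; first by apply/orP; right; apply: IH; rewrite inE hz.
rewrite inE => /orP[/eqP->|hz]; first by rewrite lexx.
by apply/orP; right; apply: IH; rewrite inE hz orbT.
Qed.

Lemma foldr_max_le (b : int) s z : b <= z -> (forall j, j \in s -> j <= z) -> foldr Order.max b s <= z.
Proof.
elim: s => [|x s IH] //= hb hs.
rewrite ge_max; apply/andP; split; first by apply: hs; rewrite mem_head.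
by apply: IH => // j hj; apply: hs; rewrite inE hj orbT.
Qed.

Lemma smin_mem s : s != [::] -> smin s \in s.
Proof. case: s => [//|x s] _; change (foldr Order.min x (x::s) \in x :: s).
move: (foldr_min_mem x (x :: s)); rewrite inE => /orP[/eqP ->|//]; exact: mem_head. Qed.

Lemma smin_le s j : j \in s -> smin s <= j.
Proof. case: s => [//|x s] hj; apply: foldr_min_le; by rewrite inE hj orbT. Qed.

Lemma smax_mem s : s != [::] -> smax s \in s.
Proof. case: s => [//|x s] _; change (foldr Order.max x (x::s) \in x :: s).
move: (foldr_max_mem x (x :: s)); rewrite inE => /orP[/eqP ->|//]; exact: mem_head. Qed.

Lemma smax_ge s j : j \in s -> j <= smax s.
Proof. case: s => [//|x s] hj; apply: foldr_max_ge; by rewrite inE hj orbT. Qed.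

Definition decb (Q : Prop) : bool := if excluded_middle_informative Q then true else false.
Lemma decbP (Q : Prop) : reflect Q (decb Q).
Proof. by rewrite /decb; case: excluded_middle_informative => h; constructor. Qed.



Lemma cover_chain d (P : finPOrderType d) (Q : P -> P -> Prop) :
  (forall x y z, Q x y -> Q y z -> Q x z) -> (forall x y, covers x y -> Q x y) ->
  forall x y, x < y -> Q x y.
Proof.
move=> Qt Qc.
suff H : forall (n : nat) (x y : P), (#|[pred z : P | ((x < z) && (z < y))%O]| <= n)%N -> x < y -> Q x y.
  by move=> x y; apply: (H _ x y (leqnn _)).
elim=> [|n IH] x y hc hxy; (have [cov|ncov] := boolP (covers x y); first exact: Qc);
move: ncov; rewrite /covers hxy /= negb_forall => /existsP[z]; rewrite negbK => /andP[hxz hzy].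
- by move: hc; rewrite leqn0 => /eqP/card0_eq/(_ z); rewrite inE hxz hzy.
- have hsub1 : [pred w | (x < w) && (w < z)] \proper [pred w | (x < w) && (w < y)].
    apply/properP; split.
      by apply/subsetP => w; rewrite !inE => /andP[-> h]; exact: lt_trans h hzy.
    by exists z; rewrite !inE ?hxz ?hzy ?ltxx ?andbF.
  have hsub2 : [pred w | (z < w) && (w < y)] \proper [pred w | (x < w) && (w < y)].
    apply/properP; split.
      by apply/subsetP => w; rewrite !inE => /andP[h ->]; rewrite (lt_trans hxz h).
    by exists z; rewrite !inE ?hxz ?hzy ?ltxx.
  apply: (Qt _ z); apply: IH => //; rewrite -ltnS.
    exact: leq_trans (proper_card hsub1) hc.
  exact: leq_trans (proper_card hsub2) hc.
Qed.

Lemma col_chain d (P : finPOrderType d) (R : P -> seq int) q (k k' : int) :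
  k \in R q -> k != smax (R q) -> k' \in R q -> k' < k -> gle R (q,k) (q,k').
Proof.
move=> hk hks.
suff H : forall N : nat, forall k', (k - k' <= N%:Z)%R -> k' \in R q -> k' < k -> gle R (q,k) (q,k').
  by move=> hk' hlt; apply: (H `|k - k'|%N) => //; lia.
have hkmax : k < smax (R q) by rewrite lt_neqAle hks smax_ge.
elim=> [|N IH] k2 hN hk2 hlt; first by lia.
set n := foldr Order.min k [seq j <- R q | k2 < j].
have hn1 : n \in k :: [seq j <- R q | k2 < j] by apply: foldr_min_mem.
have hnR : n \in R q by move: hn1; rewrite inE mem_filter => /orP[/eqP->|/andP[]].
have hk2n : k2 < n by move: hn1; rewrite inE mem_filter => /orP[/eqP->|/andP[]].
have hnk : n <= k by apply: foldr_min_le; rewrite mem_head.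
have hnmin : forall j, j \in R q -> k2 < j -> n <= j.
  by move=> j hj hj2; apply: foldr_min_le; rewrite inE mem_filter hj hj2 orbT.
have hcov : gcover R (q, n) (q, k2).
  split.
  - by rewrite /inGamma /= hnR /=; apply: contraTneq hkmax => <-; rewrite -leNgt.
  - rewrite /inGamma /= hk2 /=; apply: contraTneq hkmax => <-; rewrite -leNgt.
    exact: ltW hlt.
  - left; split => //; rewrite /next_gt hnR hk2n /=.
    by apply/allP => j hj; apply/implyP; apply: hnmin.
have [/eqP hnk'|hnk'] := boolP (n == k); first by rewrite -hnk'; apply: rt_step.
apply: (rt_trans _ _ _ (q, n)); last by apply: rt_step.
apply: IH => //; first by lia.
by rewrite lt_neqAle hnk' hnk.
Qed.



Definition sl d (P : finPOrderType d) (x y : P * int) : bool :=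
  (x.1 < y.1) || ((x.1 == y.1) && (y.2 < x.2)).

Lemma gcover_sl d (P : finPOrderType d) (R : P -> seq int) x y : gcover R x y -> sl x y.
Proof.
case: x y => [p1 k1] [p2 k2] [_ _ /= [[-> /and3P[_ h _]]|[/andP[h _] _ _]]];
by rewrite /sl /= ?h ?eqxx ?orbT.
Qed.

Lemma sl_trans d (P : finPOrderType d) (x y z : P * int) : sl x y -> sl y z -> sl x z.
Proof.
case: x y z => [p1 k1] [p2 k2] [p3 k3]; rewrite /sl /=.
case/orP=> [h1|/andP[/eqP<- h1]]; case/orP=> [h2|/andP[/eqP<- h2]].
- by rewrite (lt_trans h1 h2).
- by rewrite h1.
- by rewrite h2.
- by rewrite eqxx (lt_trans h2 h1) orbT.
Qed.

Lemma sl_irr d (P : finPOrderType d) (x : P * int) : ~~ sl x x.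
Proof. by rewrite /sl !ltxx andbF. Qed.

Lemma gle_sl d (P : finPOrderType d) (R : P -> seq int) x y : gle R x y -> x = y \/ sl x y.
Proof.
elim=> [a b /gcover_sl|a|a b c _ [->|h1] _ [<-|h2]]; auto.
by right; apply: sl_trans h1 h2.
Qed.

Lemma gle_anti d (P : finPOrderType d) (R : P -> seq int) x y : gle R x y -> gle R y x -> x = y.
Proof.
move=> /gle_sl[//|h1] /gle_sl[//|h2].
by have := sl_irr x; rewrite (sl_trans h1 h2).
Qed.

Lemma phi_down d (P : finPOrderType d) (R : P -> seq int) g x y :
  winc R g -> gle R x y -> inGamma R y && (g y.1 <= y.2) -> inGamma R x && (g x.1 <= x.2).
Proof.
move=> [gR gm]; elim=> [a b|a|a b c _ h1 _ h2]; last 2 first.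
- by [].
- by move=> /h2/h1.
case: a b => [p1 k1] [p2 k2] [hg1 _ H] /andP[_ /= hle]; rewrite hg1 /=.
case: H => [[eq12 /and3P[_ h _]]|[/andP[hc _] /and3P[_ _ /allP hall] _]].
  subst p2.
- exact: le_trans hle (ltW h).
- have h3 := le_trans (gm _ _ hc) hle.
  by have := hall _ (gR p1); rewrite h3.
Qed.

Lemma ptmeet_winc d (P : finPOrderType d) (R : P -> seq int) g h :
  winc R g -> winc R h -> winc R (ptmeet g h).
Proof.
move=> [gR gm] [hR hm]; split=> [p|p1 p2 hp]; rewrite !ffunE.
  by case: leP => _; [apply: gR|apply: hR].
by rewrite le_min !ge_min gm // hm // orbT.
Qed.

Definition topf d (P : finPOrderType d) (R : P -> seq int) : {ffun P -> int} :=
  [ffun q => smax (R q)].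

Lemma smax_mono d (P : finPOrderType d) (R : P -> seq int) :
  weakly_consistent R -> forall p1 p2, p1 < p2 -> smax (R p1) <= smax (R p2).
Proof.
move=> wc; apply: cover_chain; first by move=> x y z; apply: le_trans.
by move=> x y /wc[].
Qed.

Lemma topf_winc d (P : finPOrderType d) (R : P -> seq int) :
  restriction R -> weakly_consistent R -> winc R (topf R).
Proof.
move=> rR wc; split=> [p|p1 p2 hp]; rewrite !ffunE; first exact: smax_mem.
exact: smax_mono.
Qed.

Lemma winc_le_top d (P : finPOrderType d) (R : P -> seq int) g :
  winc R g -> ptle g (topf R).
Proof. by move=> [gR _] p; rewrite ffunE smax_ge. Qed.

Definition colmin d (P : finPOrderType d) (R : P -> seq int) (I : pred (P * int)) (q : P) : int :=
  foldr Order.min (smax (R q)) [seq k <- R q | I (q, k)].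

Lemma colmin_mem d (P : finPOrderType d) (R : P -> seq int) (I : pred (P * int)) q :
  restriction R -> colmin R I q \in R q.
Proof.
move=> rR; rewrite /colmin; have := foldr_min_mem (smax (R q)) [seq k <- R q | I (q, k)].
by rewrite inE mem_filter => /orP[/eqP->|/andP[]//]; apply: smax_mem.
Qed.

Lemma colmin_smax d (P : finPOrderType d) (R : P -> seq int) (I : pred (P * int)) q :
  colmin R I q <= smax (R q).
Proof. by apply: foldr_min_le; rewrite mem_head. Qed.

Lemma colmin_le d (P : finPOrderType d) (R : P -> seq int) (I : pred (P * int)) q k :
  I (q, k) -> k \in R q -> colmin R I q <= k.
Proof. by move=> hI hk; apply: foldr_min_le; rewrite inE mem_filter hI hk orbT. Qed.

Lemma colmin_cases d (P : finPOrderType d) (R : P -> seq int) (I : pred (P * int)) q :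
  colmin R I q = smax (R q) \/ I (q, colmin R I q).
Proof.
rewrite /colmin; have := foldr_min_mem (smax (R q)) [seq k <- R q | I (q, k)].
by rewrite inE mem_filter => /orP[/eqP->|/andP[h _]]; [left|right].
Qed.



Lemma colmin_winc d (P : finPOrderType d) (R : P -> seq int) (I : pred (P * int)) :
  restriction R -> weakly_consistent R ->
  (forall x y, inGamma R x -> I y -> gle R x y -> I x) ->
  (forall x, I x -> inGamma R x) ->
  winc R [ffun q => colmin R I q].
Proof.
move=> rR wc HI2 HI1; split=> [p|p1 p2]; first by rewrite ffunE colmin_mem.
apply: (@cover_chain _ _ (fun a b => [ffun q => colmin R I q] a <= [ffun q => colmin R I q] b)).
  by move=> x y z; apply: le_trans.
move=> {}p1 {}p2 hc; rewrite !ffunE.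
have [wmin wmax] := wc _ _ hc.
case: (colmin_cases R I p2) => [->|Ic].
  exact: le_trans (colmin_smax _ _ _) wmax.
set c := colmin R I p2 in Ic *.
have /andP[/= cR cns] := HI1 _ Ic.
set k1 := foldr Order.max (smin (R p1)) [seq j <- R p1 | j <= c].
have hsm : smin (R p1) <= c := le_trans wmin (smin_le cR).
have k1R : k1 \in R p1.
  have := foldr_max_mem (smin (R p1)) [seq j <- R p1 | j <= c].
  by rewrite -/k1 inE mem_filter => /orP[/eqP->|/andP[]//]; apply: smin_mem.
have k1c : k1 <= c.
  by apply: foldr_max_le => // j; rewrite mem_filter => /andP[].
have k1max : forall j, j \in R p1 -> j <= c -> j <= k1.
  by move=> j hj hjc; apply: foldr_max_ge; rewrite inE mem_filter hj hjc orbT.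
have [/eqP k1s | k1ns] := boolP (k1 == smax (R p1)).
  by apply: le_trans k1c; rewrite k1s colmin_smax.
have prevc : prev_le (R p1) c k1.
  by rewrite /prev_le k1R k1c /=; apply/allP => j hj; apply/implyP; apply: k1max.
set K := foldr Order.max c [seq j <- R p2 | prev_le (R p1) j k1].
have hK := foldr_max_mem c [seq j <- R p2 | prev_le (R p1) j k1].
rewrite -/K in hK.
have KR : K \in R p2 by move: hK; rewrite inE mem_filter => /orP[/eqP->|/andP[]].
have Kprev : prev_le (R p1) K k1 by move: hK; rewrite inE mem_filter => /orP[/eqP->|/andP[]].
have cK : c <= K by apply: foldr_max_ge; rewrite mem_head.
have Kmax : forall j, j \in R p2 -> prev_le (R p1) j k1 -> j <= K.
  by move=> j hj hjp; apply: foldr_max_ge; rewrite inE mem_filter hj hjp orbT.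
have Kns : K != smax (R p2).
  apply/eqP => KE; move: Kprev; rewrite KE => /and3P[_ _ /allP h].
  have := h _ (smax_mem (rR p1)); rewrite wmax /= => hs.
  by move/eqP: k1ns; apply; apply: le_anti; rewrite hs smax_ge.
have gc : gcover R (p1, k1) (p2, K).
  split; rewrite /inGamma /= ?k1R ?k1ns ?KR ?Kns //.
  right; split => // -[k [kR kK kprev]].
  by have := Kmax _ kR kprev; rewrite leNgt kK.
have gKc : gle R (p2, K) (p2, c).
  have [/eqP <-|ne] := boolP (K == c); first by apply: rt_refl.
  by apply: col_chain => //; rewrite lt_neqAle eq_sym ne cK.
have Ik1 : I (p1, k1).
  apply: (HI2 _ (p2, c)) => //; first by rewrite /inGamma /= k1R k1ns.
  by apply: (rt_trans _ _ _ (p2, K)) => //; apply: rt_step.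
exact: le_trans (colmin_le Ik1 k1R) k1c.
Qed.

Lemma colmin_iff d (P : finPOrderType d) (R : P -> seq int) (I : pred (P * int)) :
  (forall x y, inGamma R x -> I y -> gle R x y -> I x) ->
  (forall x, I x -> inGamma R x) ->
  forall x, I x = inGamma R x && (colmin R I x.1 <= x.2).
Proof.
move=> HI2 HI1 [q k] /=; apply/idP/idP.
  move=> h; have hg := HI1 _ h; rewrite hg /=.
  by apply: colmin_le h _; case/andP: hg.
move=> /andP[hg hle]; have /andP[/= kR kns] := hg.
case: (colmin_cases R I q) => [E|Ic].
  rewrite E in hle; move/eqP: kns; case; apply: le_anti.
  by rewrite hle smax_ge.
have [/eqP E|ne] := boolP (colmin R I q == k); first by rewrite -E.
apply: (HI2 _ _ hg Ic); apply: col_chain => //.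
  have /andP[] := HI1 _ Ic; done.
by rewrite lt_neqAle ne hle.
Qed.



Definition downb d (P : finPOrderType d) (R : P -> seq int) (b : P * int) : pred (P * int) :=
  fun x => inGamma R x && decb (gle R x b).

Definition mfun d (P : finPOrderType d) (R : P -> seq int) (b : P * int) : {ffun P -> int} :=
  [ffun q => colmin R (downb R b) q].

Lemma downb_HI2 d (P : finPOrderType d) (R : P -> seq int) b :
  forall x y, inGamma R x -> downb R b y -> gle R x y -> downb R b x.
Proof.
move=> x y hx /andP[_ /decbP hy] hxy; rewrite /downb hx /=.
by apply/decbP; apply: rt_trans hxy hy.
Qed.

Lemma downb_HI1 d (P : finPOrderType d) (R : P -> seq int) b :
  forall x, downb R b x -> inGamma R x.
Proof. by move=> x /andP[]. Qed.

Lemma m_winc d (P : finPOrderType d) (R : P -> seq int) b :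
  restriction R -> weakly_consistent R -> winc R (mfun R b).
Proof. move=> rR wc; apply: colmin_winc => //; [apply: downb_HI2|apply: downb_HI1]. Qed.

Lemma m_iff d (P : finPOrderType d) (R : P -> seq int) b x :
  downb R b x = inGamma R x && (mfun R b x.1 <= x.2).
Proof. by rewrite ffunE; apply: colmin_iff; [apply: downb_HI2|apply: downb_HI1]. Qed.

Lemma m_max d (P : finPOrderType d) (R : P -> seq int) b g :
  winc R g -> inGamma R b -> g b.1 <= b.2 -> ptle g (mfun R b).
Proof.
move=> wg hb hgb q; rewrite ffunE; case: (colmin_cases R (downb R b) q) => [->|].
  by apply: smax_ge; case: wg.
move=> /andP[hq /decbP hle].
by have /andP[_ //] := phi_down wg hle (introT andP (conj hb hgb)).
Qed.

Lemma m_le d (P : finPOrderType d) (R : P -> seq int) b :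
  inGamma R b -> mfun R b b.1 <= b.2.
Proof.
move=> hb; have := m_iff R b b; rewrite /downb hb /=.
have -> : decb (gle R b b) by apply/decbP; apply: rt_refl.
by move/esym.
Qed.

Lemma gle_iff d (P : finPOrderType d) (R : P -> seq int) a b :
  restriction R -> weakly_consistent R ->
  inGamma R a -> inGamma R b -> gle R a b <-> ptle (mfun R b) (mfun R a).
Proof.
move=> rR wc ha hb; split.
  move=> hab; apply: m_max => //; first exact: m_winc.
  have := m_iff R b a; rewrite /downb ha /=.
  have -> : decb (gle R a b) by apply/decbP.
  by move/esym.
move=> H; have h1 : mfun R b a.1 <= a.2 := le_trans (H a.1) (m_le ha).
have := m_iff R b a; rewrite ha h1 /= => /andP[_ /decbP] //.
Qed.

Lemma fold_eval d (P : finPOrderType d) (T : {ffun P -> int}) L q :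
  (foldr (@ptmeet d P) T L) q = foldr Order.min (T q) (map (fun g : {ffun P -> int} => g q) L).
Proof. by elim: L => [|g L IH] //=; rewrite ffunE IH. Qed.

Lemma fold_meet d (P : finPOrderType d) (R : P -> seq int) f :
  restriction R -> weakly_consistent R ->
  meet_irreducible R f ->
  forall L, (forall g, g \in L -> winc R g) -> f = foldr (@ptmeet d P) (topf R) L ->
  exists2 g, g \in L & f = g.
Proof.
move=> rR wc [Wf Ntop Hmi]; elim=> [|g L IH] hL /=.
  by move=> E; case: Ntop => g wg; rewrite E; apply: winc_le_top.
have hL' : forall g', g' \in L -> winc R g' by move=> g' hg'; apply: hL; rewrite inE hg' orbT.
have wL : winc R (foldr (@ptmeet d P) (topf R) L).
  elim: L {IH hL} hL' => [|h L IH'] hL /=; first exact: topf_winc.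
  apply: ptmeet_winc; first by apply: hL; rewrite mem_head.
  by apply: IH' => g' hg'; apply: hL; rewrite inE hg' orbT.
move=> E; case: (Hmi _ _ (hL g (mem_head _ _)) wL E) => [->|E'].
  by exists g; rewrite ?mem_head.
have [g' hg' ->] := IH hL' E'.
by exists g'; rewrite // inE hg' orbT.
Qed.

Definition PhiS d (P : finPOrderType d) (R : P -> seq int) : seq (P * int) :=
  [seq (q, k) | q <- enum P, k <- R q].

Definition Phi d (P : finPOrderType d) (R : P -> seq int) (f : {ffun P -> int}) : {fset (P * int)} :=
  [fset x in PhiS R | inGamma R x && (f x.1 <= x.2)].

Lemma Phi_mem d (P : finPOrderType d) (R : P -> seq int) f x :
  (x \in Phi R f) = inGamma R x && (f x.1 <= x.2).
Proof.
rewrite /Phi !inE /=; case hx: (inGamma R x); rewrite ?andbF //=.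
case: x hx => q k /andP[/= hk _]; case: (f q <= k); rewrite ?andbF ?andbT //.
by apply/allpairsPdep; exists q, k; rewrite mem_enum.
Qed.



Lemma Phi_le d (P : finPOrderType d) (R : P -> seq int) f g :
  winc R f -> winc R g -> Phi R f = Phi R g -> forall q, g q <= f q.
Proof.
move=> [fR _] [gR _] E q.
have [/eqP ->|ne] := boolP (f q == smax (R q)); first exact: smax_ge.
have : (q, f q) \in Phi R f by rewrite Phi_mem /inGamma /= fR ne lexx.
by rewrite E Phi_mem => /andP[].
Qed.

Local Close Scope fset_scope.
Unset Implicit Arguments.

Theorem theorem2p25 (d : Order.disp_t) (P : finPOrderType d)
    (R : P -> seq int) :
  restriction R -> weakly_consistent R ->
  (exists phi : Gamma R -> {ffun P -> int},
     [/\ forall a, meet_irreducible R (phi a),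
         injective phi,
         forall f, meet_irreducible R f -> exists a, phi a = f
       & forall a b, gle R (val a) (val b) <-> ptle (phi b) (phi a)]) /\
  (exists Phi : {ffun P -> int} -> {fset (P * int)},
     [/\ forall f, winc R f -> order_ideal R (Phi f),
         forall f g, winc R f -> winc R g -> Phi f = Phi g -> f = g
       & forall I, order_ideal R I -> exists2 f, winc R f & Phi f = I]).
Proof.
move=> rR wc; split.
  exists (fun a : Gamma R => mfun R (val a)); split.
  - move=> [b hb] /=; split; first exact: m_winc.
      move=> H; have := H _ (topf_winc rR wc) b.1; rewrite ffunE => hs.
      have := le_trans hs (m_le hb); case/andP: hb => /smax_ge h1 /eqP h2 h3.
      by apply: h2; apply: le_anti; rewrite h1 h3.
    move=> g h wg wh E; have hb' := m_le hb; rewrite E ffunE ge_min in hb'.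
    case/orP: hb' => [hg|hh].
      left; apply/ffunP => q; apply: le_anti; apply/andP; split; last exact: (m_max wg hb hg q).
      by rewrite E ffunE ge_min lexx.
    right; apply/ffunP => q; apply: le_anti; apply/andP; split; last exact: (m_max wh hb hh q).
    by rewrite E ffunE ge_min lexx orbT.
  - move=> a b E; apply: val_inj; apply: gle_anti.
      by apply/(gle_iff rR wc (valP a) (valP b)); rewrite E => q; apply: lexx.
    by apply/(gle_iff rR wc (valP b) (valP a)); rewrite E => q; apply: lexx.
  - move=> f fmi; have [Wf Ntop Hmi] := fmi.
    set L := [seq mfun R (q, f q) | q <- enum P & f q != smax (R q)].
    have hL : forall g, g \in L -> winc R g.
      by move=> g /mapP[q _ ->]; apply: m_winc.
    have EL : f = foldr (@ptmeet d P) (topf R) L.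
      apply/ffunP => q; rewrite fold_eval ffunE; apply: le_anti; apply/andP; split.
        apply: foldr_min_ge; first by apply: smax_ge; case: Wf.
        move=> j /mapP[g /mapP[q' hq' ->] ->].
        move: hq'; rewrite mem_filter => /andP[hne _].
        apply: (m_max Wf) => //; rewrite /inGamma /= hne andbT; by case: Wf.
      have [/eqP E|ne] := boolP (f q == smax (R q)).
        by rewrite E; apply: foldr_min_le; rewrite mem_head.
      have hgq : inGamma R (q, f q) by rewrite /inGamma /= ne andbT; case: Wf.
      apply: le_trans (m_le hgq).
      apply: foldr_min_le; rewrite inE; apply/orP; right.
      apply: (map_f (fun g : {ffun P -> int} => g q)); apply: map_f.
      by rewrite mem_filter ne mem_enum.
    have [g /mapP[q hq ->] ->] := fold_meet rR wc fmi hL EL.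
    have hg : inGamma R (q, f q).
      move: hq; rewrite mem_filter => /andP[hne _].
      by rewrite /inGamma /= hne andbT; case: Wf.
    by exists (exist _ (q, f q) hg).
  - by move=> a b; apply: gle_iff => //; [apply: (valP a)|apply: (valP b)].
exists (Phi R); split.
- move=> f wf; split; first by move=> x; rewrite Phi_mem => /andP[].
  move=> x y hx; rewrite !Phi_mem => hy hxy.
  exact: phi_down wf hxy hy.
- move=> f g wf wg E; apply/ffunP => q; apply: le_anti.
  by rewrite (Phi_le wg wf (esym E)) (Phi_le wf wg E).
- move=> I [HI1 HI2].
  have HI2' : forall x y, inGamma R x -> (fun z => z \in I) y -> gle R x y -> (fun z => z \in I) x.
    by move=> x y hx hy hxy; apply: (HI2 x y).
  exists [ffun q => colmin R (fun z => z \in I) q].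
    by apply: colmin_winc.
  apply/fsetP => x; rewrite Phi_mem ffunE.
  by rewrite (colmin_iff (I := fun z => z \in I) HI2' HI1 x).
Qed.
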